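(* Let $G=\mathbb{Z}_{d_1}\times\cdots\times\mathbb{Z}_{d_m}$ and $N=\mathbb{Z}_{d'_1}\times\cdots\times\mathbb{Z}_{d'_{m'}}$ be groups of the same order $n$, and let $f:G\to\tilde N$ be a function. For $r\in N$ and $k\in G$ define $v^{(r)}_k\in\mathbb{C}^G$ by $$(v^{(r)}_k)_\ell=\frac1{\sqrt n}\,\chi_k(\ell)\,\chi_r(f(\ell)),\qquad \ell\in G,$$ and let $M_r$ be the $n\times n$ matrix with columns $v^{(r)}_k$, $k\in G$. Then $\{M_r: r\in N\}$ is a complete system of mutually unbiased Hadamards if and only if for all $g_1,g_2,g_3,g_4\in G$ with $g_1+g_2=g_3+g_4$ and $\{g_1,g_2\}\neq\{g_3,g_4\}$ (as multisets) we have $f(g_1)+f(g_2)-f(g_3)-f(g_4)\in\tilde N^*$.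
   Context: $\mathbb{R}_d$ is the additive group of reals modulo $d$; $\tilde N=\mathbb{R}_{d'_1}\times\cdots\times\mathbb{R}_{d'_{m'}}\supseteq N$. For $a\in G$, $b\in G$: $\chi_a(b)=\exp(\sum_{j}\frac{2\pi i}{d_j}a_jb_j)$; for $r\in N$, $x\in\tilde N$: $\chi_r(x)=\exp(\sum_j\frac{2\pi i}{d'_j}r_jx_j)$. $\tilde N^*$ is the set of $x\in\tilde N$ having at least one component $x_j$ that is an integer not congruent to $0$ mod $d'_j$. A complex Hadamard matrix is a unitary $n\times n$ matrix all of whose entries have absolute value $1/\sqrt n$; two are mutually unbiased if $|\langle x|y\rangle|=1/\sqrt n$ for every column $x$ of one and column $y$ of the other; a complete system of mutually unbiased Hadamards is a set of $n$ pairwise mutually unbiased complex Hadamard $n\times n$ matrices. *)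

(* Defs.v *)
From mathcomp Require Import all_boot.
From Stdlib Require Import Reals ZArith.
Set Implicit Arguments. Unset Strict Implicit. Unset Printing Implicit Defensive.

(* The group Z_{d_1} x ... x Z_{d_m}: elements are tuples of residues a_j < d_j. *)
Definition Zprod (m : nat) (d : 'I_m -> nat) : finType :=
  {dffun forall j : 'I_m, 'I_(d j)}.

Definition Zsum_eq (m : nat) (d : 'I_m -> nat) (g1 g2 g3 g4 : Zprod d) : Prop :=
  forall j : 'I_m, ((g1 j + g2 j) %% d j = (g3 j + g4 j) %% d j)%nat.

Record Cplx := mkC { Re : R; Im : R }.
Definition C0 : Cplx := mkC 0 0.
Definition C1 : Cplx := mkC 1 0.
Definition Cadd (z w : Cplx) : Cplx := mkC (Re z + Re w) (Im z + Im w).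
Definition Cmul (z w : Cplx) : Cplx :=
  mkC (Re z * Re w - Im z * Im w) (Re z * Im w + Im z * Re w).
Definition Cconj (z : Cplx) : Cplx := mkC (Re z) (- Im z).
Definition Cscale (a : R) (z : Cplx) : Cplx := mkC (a * Re z) (a * Im z).
Definition Cmod (z : Cplx) : R := sqrt (Re z * Re z + Im z * Im z).
Definition Cexpi (t : R) : Cplx := mkC (cos t) (sin t).

Definition Rsum (I : finType) (F : I -> R) : R := \big[Rplus/0%R]_(i : I) F i.
Definition Csum (I : finType) (F : I -> Cplx) : Cplx := \big[Cadd/C0]_(i : I) F i.

Definition chiG (m : nat) (d : 'I_m -> nat) (a b : Zprod d) : Cplx :=
  Cexpi (Rsum (fun j : 'I_m =>
    2 * PI * INR (a j) * INR (b j) / INR (d j)))%R.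

(* Elements of tilde N = R_{d'_1} x ... x R_{d'_m'} are represented by real
   representatives x : 'I_m' -> R (everything used below is invariant under
   changing x_j by multiples of d'_j). chi_r(x) = exp(sum_j 2 pi i r_j x_j / d'_j). *)
Definition chiN (m' : nat) (d' : 'I_m' -> nat) (r : Zprod d') (x : 'I_m' -> R) : Cplx :=
  Cexpi (Rsum (fun j : 'I_m' => 2 * PI * INR (r j) * x j / INR (d' j)))%R.

Definition in_Nstar (m' : nat) (d' : 'I_m' -> nat) (x : 'I_m' -> R) : Prop :=
  exists (j : 'I_m') (z : Z), x j = IZR z /\ ~ (Z.divide (Z.of_nat (d' j)) z).

(* Square complex matrices indexed by a finite type I: U i j = entry row i, column j. *)
Definition cmatrix (I : finType) := I -> I -> Cplx.

Definition col_inner (I : finType) (U V : cmatrix I) (k k' : I) : Cplx :=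
  Csum (fun l : I => Cmul (Cconj (U l k)) (V l k')).

Definition unitary (I : finType) (U : cmatrix I) : Prop :=
  forall k k' : I, col_inner U U k k' = if k == k' then C1 else C0.

Definition complex_hadamard (I : finType) (U : cmatrix I) : Prop :=
  unitary U /\ forall i j : I, Cmod (U i j) = (1 / sqrt (INR #|I|))%R.

Definition mutually_unbiased (I : finType) (U V : cmatrix I) : Prop :=
  forall k k' : I, Cmod (col_inner U V k k') = (1 / sqrt (INR #|I|))%R.

(* {M_r : r in J} is a complete system of mutually unbiased Hadamards:
   #|I| = n distinct matrices (indexed injectively by J with #|J| = n),
   each a complex Hadamard, pairwise mutually unbiased. *)
Definition complete_MUH (I J : finType) (M : J -> cmatrix I) : Prop :=
  #|J| = #|I| /\
  (forall r r', (forall i j, M r i j = M r' i j) -> r = r') /\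
  (forall r, complex_hadamard (M r)) /\
  (forall r r', r <> r' -> mutually_unbiased (M r) (M r')).

Definition Mr (m m' : nat) (d : 'I_m -> nat) (d' : 'I_m' -> nat) (n : nat)
  (f : Zprod d -> ('I_m' -> R)) (r : Zprod d') : cmatrix (Zprod d) :=
  fun l k => Cscale (1 / sqrt (INR n))%R (Cmul (chiG k l) (chiN r (f l))).

(* Main.v *)
Require Import Defs.
From mathcomp Require Import all_boot.
From Stdlib Require Import Reals ZArith.
From HB Require Import structures.
From Stdlib Require Import Lra Lia Classical.
Require Import Defs.
Set Implicit Arguments. Unset Strict Implicit. Unset Printing Implicit Defensive.

Lemma Cext (z w : Cplx) : Re z = Re w -> Im z = Im w -> z = w.
Proof. by case: z; case: w => ? ? ? ? /= -> ->. Qed.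

Lemma CaddA : associative Cadd.
Proof. move=> x y z; apply: Cext => /=; ring. Qed.
Lemma CaddC : commutative Cadd.
Proof. move=> x y; apply: Cext => /=; ring. Qed.
Lemma Cadd0 : left_id C0 Cadd.
Proof. move=> x; apply: Cext => /=; ring. Qed.
Lemma CmulA : associative Cmul.
Proof. move=> x y z; apply: Cext => /=; ring. Qed.
Lemma CmulC : commutative Cmul.
Proof. move=> x y; apply: Cext => /=; ring. Qed.
Lemma Cmul1 : left_id C1 Cmul.
Proof. move=> x; apply: Cext => /=; ring. Qed.
Lemma Cmul0l : left_zero C0 Cmul.
Proof. move=> x; apply: Cext => /=; ring. Qed.
Lemma Cmul0r : right_zero C0 Cmul.
Proof. move=> x; apply: Cext => /=; ring. Qed.
Lemma CmulDl : left_distributive Cmul Cadd.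
Proof. move=> x y z; apply: Cext => /=; ring. Qed.
Lemma CmulDr : right_distributive Cmul Cadd.
Proof. move=> x y z; apply: Cext => /=; ring. Qed.

HB.instance Definition _ := Monoid.isComLaw.Build Cplx C0 Cadd CaddA CaddC Cadd0.
HB.instance Definition _ := Monoid.isComLaw.Build Cplx C1 Cmul CmulA CmulC Cmul1.
HB.instance Definition _ := Monoid.isMulLaw.Build Cplx C0 Cmul Cmul0l Cmul0r.
HB.instance Definition _ := Monoid.isAddLaw.Build Cplx Cmul Cadd CmulDl CmulDr.

Lemma RplusA : associative Rplus. Proof. move=> x y z; ring. Qed.
Lemma RplusC : commutative Rplus. Proof. move=> x y; ring. Qed.
Lemma Rplus0 : left_id 0%R Rplus. Proof. move=> x; ring. Qed.
Lemma RmultA : associative Rmult. Proof. move=> x y z; ring. Qed.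
Lemma RmultC : commutative Rmult. Proof. move=> x y; ring. Qed.
Lemma Rmult1 : left_id 1%R Rmult. Proof. move=> x; ring. Qed.
Lemma Rmult0l : left_zero 0%R Rmult. Proof. move=> x; ring. Qed.
Lemma Rmult0r : right_zero 0%R Rmult. Proof. move=> x; ring. Qed.
Lemma RmultDl : left_distributive Rmult Rplus. Proof. move=> x y z; ring. Qed.
Lemma RmultDr : right_distributive Rmult Rplus. Proof. move=> x y z; ring. Qed.
HB.instance Definition _ := Monoid.isComLaw.Build R 0%R Rplus RplusA RplusC Rplus0.
HB.instance Definition _ := Monoid.isComLaw.Build R 1%R Rmult RmultA RmultC Rmult1.
HB.instance Definition _ := Monoid.isMulLaw.Build R 0%R Rmult Rmult0l Rmult0r.
HB.instance Definition _ := Monoid.isAddLaw.Build R Rmult Rplus RmultDl RmultDr.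

Lemma test (I : finType) (F G : I -> Cplx) : Csum (fun i => Cadd (F i) (G i)) = Cadd (Csum F) (Csum G).
Proof. by rewrite /Csum big_split. Qed.
Lemma test2 (I : finType) (F : I -> Cplx) a : Cmul a (Csum F) = Csum (fun i => Cmul a (F i)).
Proof. by rewrite /Csum big_distrr. Qed.

Local Open Scope R_scope.

Definition N2 (z : Cplx) : R := Re z * Re z + Im z * Im z.

Lemma E_add a b : Cexpi (a + b) = Cmul (Cexpi a) (Cexpi b).
Proof. apply: Cext => /=; [rewrite cos_plus | rewrite sin_plus]; ring. Qed.
Lemma E_opp a : Cexpi (- a) = Cconj (Cexpi a).
Proof. apply: Cext => /=; [rewrite cos_neg | rewrite sin_neg]; ring. Qed.
Lemma E_sub a b : Cexpi (a - b) = Cmul (Cexpi a) (Cconj (Cexpi b)).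
Proof. by rewrite /Rminus E_add E_opp. Qed.
Lemma E_0 : Cexpi 0 = C1.
Proof. apply: Cext => /=; [exact: cos_0 | exact: sin_0]. Qed.
Lemma E_2piZ (z : Z) : Cexpi (2 * PI * IZR z) = C1.
Proof.
have s0 : sin (IZR z * PI) = 0 by apply: sin_eq_0_1; exists z.
apply: Cext => /=.
  by replace (2 * PI * IZR z) with (2 * (IZR z * PI)) by ring; rewrite cos_2a_sin s0; ring.
by replace (2 * PI * IZR z) with (2 * (IZR z * PI)) by ring; rewrite sin_2a s0; ring.
Qed.
Lemma N2_E a : N2 (Cexpi a) = 1.
Proof. rewrite /N2 /=; have := sin2_cos2 a; rewrite /Rsqr; lra. Qed.
Lemma E_eq1 a : Cexpi a = C1 -> exists k : Z, a = 2 * PI * IZR k.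
Proof.
move=> h; have hc : cos a = 1 by rewrite -[cos a]/(Re (Cexpi a)) h.
have : sin (a / 2) = 0.
  have := cos_2a_sin (a / 2); replace (2 * (a / 2)) with a by field; rewrite hc => e.
  have : sin (a/2) * sin (a/2) = 0 by lra.
  by move/Rmult_integral => [].
case/sin_eq_0_0 => k hk; exists k; lra.
Qed.

Lemma N2_mul z w : N2 (Cmul z w) = N2 z * N2 w.
Proof. rewrite /N2 /=; ring. Qed.
Lemma N2_ge0 z : 0 <= N2 z.
Proof. rewrite /N2; nra. Qed.
Lemma N2_eq0 z : N2 z = 0 -> z = C0.
Proof. rewrite /N2 => h; apply: Cext => /=; nra. Qed.
Lemma Cmod_N2 z : Cmod z = sqrt (N2 z).
Proof. by []. Qed.

Section Sums.
Variable I : finType.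
Implicit Types F G : I -> Cplx.

Lemma Csum_Re F : Re (Csum F) = Rsum (fun i => Re (F i)).
Proof. by rewrite /Csum /Rsum (big_morph Re (id2 := C0) (op2 := Cadd) (id1 := 0) (op1 := Rplus)). Qed.
Lemma Csum_Im F : Im (Csum F) = Rsum (fun i => Im (F i)).
Proof. by rewrite /Csum /Rsum (big_morph Im (id2 := C0) (op2 := Cadd) (id1 := 0) (op1 := Rplus)). Qed.
Lemma Csum_conj F : Cconj (Csum F) = Csum (fun i => Cconj (F i)).
Proof.
rewrite /Csum (big_morph Cconj (id2 := C0) (op2 := Cadd) (id1 := C0) (op1 := Cadd)) //.
  by move=> x y; apply: Cext => /=; ring.
by apply: Cext => /=; ring.
Qed.
Lemma Csum_scale a F : Cscale a (Csum F) = Csum (fun i => Cscale a (F i)).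
Proof.
rewrite /Csum (big_morph (Cscale a) (id2 := C0) (op2 := Cadd) (id1 := C0) (op1 := Cadd)) //.
  by move=> x y; apply: Cext => /=; ring.
by apply: Cext => /=; ring.
Qed.
Lemma Csum_mull a F : Cmul a (Csum F) = Csum (fun i => Cmul a (F i)).
Proof. by rewrite /Csum big_distrr. Qed.
Lemma Csum_mulr a F : Cmul (Csum F) a = Csum (fun i => Cmul (F i) a).
Proof. by rewrite /Csum big_distrl. Qed.
Lemma Csum_add F G : Csum (fun i => Cadd (F i) (G i)) = Cadd (Csum F) (Csum G).
Proof. by rewrite /Csum big_split. Qed.
Lemma Csum_ext F G : (forall i, F i = G i) -> Csum F = Csum G.
Proof. by move=> h; rewrite /Csum; apply: eq_bigr. Qed.
Lemma Rsum_ext (F G : I -> R) : (forall i, F i = G i) -> Rsum F = Rsum G.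
Proof. by move=> h; rewrite /Rsum; apply: eq_bigr. Qed.
Lemma Rsum_add (F G : I -> R) : Rsum (fun i => F i + G i) = Rsum F + Rsum G.
Proof. by rewrite /Rsum big_split. Qed.
Lemma Rsum_mull a (F : I -> R) : a * Rsum F = Rsum (fun i => a * F i).
Proof. by rewrite /Rsum big_distrr. Qed.
Lemma Rsum_opp (F : I -> R) : - Rsum F = Rsum (fun i => - F i).
Proof. have -> : - Rsum F = (-1) * Rsum F by ring. rewrite Rsum_mull; apply: Rsum_ext => i; ring. Qed.
Lemma Rsum_sub (F G : I -> R) : Rsum (fun i => F i - G i) = Rsum F - Rsum G.
Proof. by rewrite /Rminus Rsum_opp -Rsum_add. Qed.
Lemma Rsum_const (c : R) : Rsum (fun _ : I => c) = INR #|I| * c.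
Proof.
rewrite /Rsum big_const_seq cardE /enum_mem size_filter.
have -> : count predT (index_enum I) = count (mem (@predT I)) (Finite.enum I) by [].
elim: (count _ _) => [|k ih]; first by rewrite /=; ring.
rewrite S_INR /= ih; ring.
Qed.
Lemma Rsum_ge0 (F : I -> R) : (forall i, 0 <= F i) -> 0 <= Rsum F.
Proof.
move=> h; rewrite /Rsum; apply: (big_ind (fun x => 0 <= x)) => //.
  exact: Rle_refl.
by move=> x y; lra.
Qed.
Lemma Rsum_eq0 (F : I -> R) : (forall i, 0 <= F i) -> Rsum F = 0 -> forall i, F i = 0.
Proof.
move=> h s i; move: s; rewrite /Rsum (bigD1 i) //=.
have : 0 <= \big[Rplus/0]_(j | j != i) F j.
  apply: (big_ind (fun x => 0 <= x)) => //; first exact: Rle_refl.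
  by move=> x y; lra.
by have := h i; lra.
Qed.
End Sums.

Lemma Csum_swap (I J : finType) (F : I -> J -> Cplx) :
  Csum (fun i => Csum (fun j => F i j)) = Csum (fun j => Csum (fun i => F i j)).
Proof. by rewrite /Csum exchange_big. Qed.
Lemma Rsum_swap (I J : finType) (F : I -> J -> R) :
  Rsum (fun i => Rsum (fun j => F i j)) = Rsum (fun j => Rsum (fun i => F i j)).
Proof. by rewrite /Rsum exchange_big. Qed.

Lemma E_Rsum (I : finType) (t : I -> R) :
  Cexpi (Rsum t) = \big[Cmul/C1]_i Cexpi (t i).
Proof.
rewrite /Rsum (big_morph Cexpi (id2 := 0) (op2 := Rplus) (id1 := C1) (op1 := Cmul)) //.
  exact: E_add.
exact: E_0.
Qed.

Lemma card_Zprod p (D : 'I_p -> nat) : #|Zprod D| = (\prod_(j < p) D j)%nat.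
Proof.
rewrite /Zprod card_dep_ffun foldrE big_map enumT; apply: eq_bigr => j _.
by rewrite card_ord.
Qed.

Definition shZ p (D : 'I_p -> nat) (HD : forall j, (0 < D j)%nat) (j0 : 'I_p) (k : Zprod D) : Zprod D :=
  finfun (fun j => Ordinal (ltn_pmod (k j + (j == j0)) (HD j))).
Lemma shZE p (D : 'I_p -> nat) HD j0 k j : nat_of_ord (@shZ p D HD j0 k j) = ((k j + (j == j0)) %% D j)%nat.
Proof. by rewrite /shZ ffunE. Qed.

Lemma shZ_inj p (D : 'I_p -> nat) HD j0 : injective (@shZ p D HD j0).
Proof.
move=> k k' e; apply/ffunP => j; apply: val_inj => /=.
have := congr1 (fun g : Zprod D => nat_of_ord (g j)) e; rewrite /= !shZE => /eqP.
by rewrite eqn_modDr !modn_small // => /eqP.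
Qed.

Local Open Scope R_scope.

Definition ph p (D : 'I_p -> nat) (k : Zprod D) (w : 'I_p -> R) : R :=
  Rsum (fun j => 2 * PI * INR (k j) * w j / INR (D j)).

Lemma Rsum_single (I : finType) (F : I -> R) i0 : (forall i, i != i0 -> F i = 0) -> Rsum F = F i0.
Proof. move=> h; rewrite /Rsum (bigD1 i0) //= big1 => [|i /h //]; ring. Qed.

Lemma INR_pos p (D : 'I_p -> nat) (HD : forall j, (0 < D j)%nat) j : 0 < INR (D j).
Proof. apply: lt_0_INR; apply/ltP; exact: HD. Qed.

Lemma ph_shift p (D : 'I_p -> nat) HD j0 (w : 'I_p -> R) (z : Z) k :
  w j0 = IZR z ->
  Cexpi (ph (@shZ p D HD j0 k) w) = Cmul (Cexpi (ph k w)) (Cexpi (2 * PI * IZR z / INR (D j0))).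
Proof.
move=> hw; have Dp := INR_pos HD j0.
have key : ph (shZ HD j0 k) w = ph k w +
   2 * PI * (INR (shZ HD j0 k j0) - INR (k j0)) * w j0 / INR (D j0).
  suff : ph (shZ HD j0 k) w - ph k w =
     2 * PI * (INR (shZ HD j0 k j0) - INR (k j0)) * w j0 / INR (D j0) by lra.
  rewrite /ph -Rsum_sub (Rsum_single (i0 := j0)).
    by field; lra.
  move=> j hj; rewrite shZE (negbTE hj) addn0 modn_small //; field.
  by have := INR_pos HD j; lra.
rewrite key shZE eqxx hw -E_add.
have hk := ltn_ord (k j0).
case: (ltngtP (k j0).+1 (D j0)) => h.
- rewrite modn_small ?addn1 // S_INR; congr Cexpi; field; lra.
- by rewrite ltnS in h; move: (leq_ltn_trans h hk); rewrite ltnn.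
- rewrite addn1 h modnn /=.
  have hD : INR (D j0) = INR (k j0) + 1.
    by rewrite -S_INR; congr INR; apply/esym; exact: h.
  have -> : ph k w + 2 * PI * (0 - INR (k j0)) * IZR z / INR (D j0) =
            (ph k w + 2 * PI * IZR z / INR (D j0)) + 2 * PI * IZR (- z).
    rewrite opp_IZR; field_simplify; [|lra|lra]. rewrite hD; field; lra.
  by rewrite E_add E_2piZ; apply: Cext => /=; ring.
Qed.

Lemma Cmul_cancel (S c : Cplx) : S = Cmul S c -> c <> C1 -> S = C0.
Proof.
move=> e hc; set u := mkC (1 - Re c) (- Im c).
have hu : Cmul S u = C0.
  have e1 : Re S = Re (Cmul S c) by rewrite -e.
  have e2 : Im S = Im (Cmul S c) by rewrite -e.
  move: e1 e2 => /= e1 e2; apply: Cext => /=; lra.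
have : N2 S * N2 u = 0 by rewrite -N2_mul hu /N2 /=; ring.
case/Rmult_integral => h; first exact: N2_eq0.
exfalso; apply: hc; have := N2_eq0 h; rewrite /u => e'.
have r1 : 1 - Re c = 0 by rewrite -[1 - Re c]/(Re u) /u e'.
have r2 : - Im c = 0 by rewrite -[- Im c]/(Im u) /u e'.
apply: Cext => /=; lra.
Qed.

Lemma sum_ph_zero p (D : 'I_p -> nat) (HD : forall j, (0 < D j)%nat) (w : 'I_p -> R) j0 (z : Z) :
  w j0 = IZR z -> ~ (Z.divide (Z.of_nat (D j0)) z) ->
  Csum (fun k : Zprod D => Cexpi (ph k w)) = C0.
Proof.
move=> hw hnd; apply: (@Cmul_cancel _ (Cexpi (2 * PI * IZR z / INR (D j0)))).
  rewrite {1}/Csum (reindex_inj (@shZ_inj p D HD j0)) /=.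
  under eq_bigr => i _ do rewrite (@ph_shift p D HD j0 w z i hw).
  by rewrite -big_distrl.
move=> /E_eq1 [k hk]; apply: hnd; exists k.
have Dp := INR_pos HD j0.
apply: eq_IZR; rewrite mult_IZR -INR_IZR_INZ.
have hP : PI <> 0 by have := PI_RGT_0; lra.
have e : IZR z = (2 * PI * IZR z / INR (D j0)) * INR (D j0) / (2 * PI).
  by field; split; lra.
rewrite {1}e hk; field; lra.
Qed.

Lemma Csum_C1 (I : finType) : Csum (fun _ : I => C1) = mkC (INR #|I|) 0.
Proof.
apply: Cext; rewrite ?Csum_Re ?Csum_Im /= Rsum_const /=; ring.
Qed.

Lemma sum_ph_all p (D : 'I_p -> nat) (HD : forall j, (0 < D j)%nat) (w : 'I_p -> R) :
  (forall j, exists z : Z, w j = IZR z * INR (D j)) ->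
  Csum (fun k : Zprod D => Cexpi (ph k w)) = mkC (INR #|Zprod D|) 0.
Proof.
move=> hw; rewrite -Csum_C1; apply: Csum_ext => k.
rewrite /ph E_Rsum big1 // => j _.
case: (hw j) => z hz; rewrite hz.
have Dp := INR_pos HD j.
have -> : 2 * PI * INR (k j) * (IZR z * INR (D j)) / INR (D j) = 2 * PI * IZR (Z.of_nat (k j) * z).
  rewrite mult_IZR -INR_IZR_INZ; field; lra.
exact: E_2piZ.
Qed.

Section Prod.
Variables (p : nat) (D : 'I_p -> nat) (HD : forall j, (0 < D j)%nat).
Let M := (\max_(j : 'I_p) D j)%nat.
Let leM j : (D j <= M)%nat := leq_bigmax j.

Definition toOrd j (s : nat) : 'I_(D j) := Ordinal (ltn_pmod s (HD j)).
Lemma toOrdK j (s : 'I_(D j)) : toOrd j s = s.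
Proof. by apply: val_inj; rewrite /= modn_small. Qed.

Lemma Csum_prod (F : forall j, 'I_(D j) -> Cplx) :
  Csum (fun r : Zprod D => \big[Cmul/C1]_j F j (r j)) =
  \big[Cmul/C1]_j Csum (fun s : 'I_(D j) => F j s).
Proof.
pose G j (s : 'I_M) := F j (toOrd j s).
have e1 : forall j, Csum (fun s : 'I_(D j) => F j s) = \big[Cadd/C0]_(s < M | (true && (s < D j))%nat) G j s.
  move=> j; rewrite (big_ord_narrow_cond (leM j)) /Csum; apply: eq_bigr => s _.
  by rewrite /G; congr (F j); apply: val_inj; rewrite /= modn_small.
under [RHS]eq_bigr => j _ do rewrite e1.
rewrite (bigA_distr_big_dep (fun j (s : 'I_M) => (s < D j)%nat) G).
pose h (r : Zprod D) : {ffun 'I_p -> 'I_M} := [ffun j => widen_ord (leM j) (r j)].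
pose h' (g : {ffun 'I_p -> 'I_M}) : Zprod D := finfun (fun j => toOrd j (g j)).
rewrite (reindex h); last first.
  exists h' => g; rewrite inE => hg.
    apply/ffunP => j; rewrite /h' ffunE /h ffunE /=.
    by apply: val_inj; rewrite /= modn_small.
  apply/ffunP => j; rewrite /h ffunE /h' ffunE; apply: val_inj => /=.
  rewrite modn_small //.
  by move: hg => /forallP /(_ j).
rewrite /Csum; apply: eq_big => r.
  by apply/esym/forallP => j; rewrite /h ffunE /= unfold_in /=.
move=> _; apply: eq_bigr => j _; rewrite /G /h ffunE /=.
by congr (F j); apply: val_inj; rewrite /= modn_small.
Qed.
End Prod.

Local Open Scope R_scope.

Lemma geom n t : Cmul (mkC (1 - cos t) (- sin t)) (\big[Cadd/C0]_(s < n) Cexpi (INR s * t)) =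
  mkC (1 - cos (INR n * t)) (- sin (INR n * t)).
Proof.
elim: n => [|n ih].
  rewrite big_ord0; apply: Cext => /=; rewrite Rmult_0_l ?cos_0 ?sin_0; ring.
rewrite S_INR big_ord_recr CmulDr.
rewrite (eq_bigr (fun i : 'I_n => Cexpi (INR i * t))) // ih.
have -> : (INR n + 1) * t = INR n * t + t by ring.
rewrite [nat_of_ord _]/=.
apply: Cext => /=; rewrite ?cos_plus ?sin_plus; ring.
Qed.

Lemma geom_zero (D : nat) (x : R) : (0 < D)%nat ->
  \big[Cadd/C0]_(s < D) Cexpi (2 * PI * INR s * x / INR D) = C0 ->
  exists z : Z, x = IZR z /\ ~ (Z.divide (Z.of_nat D) z).
Proof.
move=> hD h.
have Dp : 0 < INR D by apply: lt_0_INR; apply/ltP.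
have hP := PI_RGT_0.
set t := 2 * PI * x / INR D.
have e : \big[Cadd/C0]_(s < D) Cexpi (INR s * t) = C0.
  rewrite -{}[RHS]h; apply: eq_bigr => s _; congr Cexpi; rewrite /t; field; lra.
have g := geom D t; rewrite e Cmul0r in g.
have c1 : cos (INR D * t) = 1.
  have := congr1 Re g; rewrite /= => g'; lra.
have s1 : sin (INR D * t) = 0.
  have := congr1 Im g; rewrite /= => g'; lra.
have hDt : INR D * t = 2 * PI * x by rewrite /t; field; lra.
have : Cexpi (2 * PI * x) = C1 by rewrite -hDt; apply: Cext.
case/E_eq1 => k hk.
have hx : x = IZR k by apply: (Rmult_eq_reg_l (2 * PI)); [lra|lra].
exists k; split => // -[q hq].
have : \big[Cadd/C0]_(s < D) Cexpi (INR s * t) = Csum (fun _ : 'I_D => C1).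
  rewrite /Csum; apply: eq_bigr => s _.
  have -> : INR s * t = 2 * PI * IZR (Z.of_nat s * q).
    rewrite /t hx hq mult_IZR mult_IZR -INR_IZR_INZ -INR_IZR_INZ; field; lra.
  exact: E_2piZ.
rewrite e Csum_C1 card_ord => e0; have := congr1 Re e0; rewrite /=; lra.
Qed.

Lemma Cprod_neq0 (I : finType) (F : I -> Cplx) : (forall i, F i <> C0) -> \big[Cmul/C1]_i F i <> C0.
Proof.
move=> h; apply: (big_ind (fun z => z <> C0)).
- move=> e; have := congr1 Re e; rewrite /=; lra.
- move=> x y hx hy e.
  have : N2 x * N2 y = 0 by rewrite -N2_mul e /N2 /=; ring.
  by case/Rmult_integral => /N2_eq0.
- by move=> i _; apply: h.
Qed.

Lemma A_zero_Nstar p (D : 'I_p -> nat) (HD : forall j, (0 < D j)%nat) (x : 'I_p -> R) :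
  Csum (fun r : Zprod D => chiN r x) = C0 -> in_Nstar D x.
Proof.
move=> h.
have e : Csum (fun r : Zprod D => chiN r x) =
   \big[Cmul/C1]_j Csum (fun s : 'I_(D j) => Cexpi (2 * PI * INR s * x j / INR (D j))).
  rewrite -(Csum_prod HD (fun j (s : 'I_(D j)) => Cexpi (2 * PI * INR s * x j / INR (D j)))).
  by apply: Csum_ext => r; rewrite /chiN E_Rsum.
rewrite e in h.
apply: NNPP => hn.
apply: (Cprod_neq0 _ h) => j hj.
apply: hn; case: (geom_zero (HD j) hj) => z [hz hnd].
by exists j, z.
Qed.

Local Open Scope R_scope.

Lemma N2_scale a z : N2 (Cscale a z) = a * a * N2 z.
Proof. rewrite /N2 /=; ring. Qed.

Lemma N2_sum1 (I : finType) (a : I -> R) :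
  N2 (Csum (fun l => Cexpi (a l))) = Re (Csum (fun l1 => Csum (fun l2 => Cexpi (a l1 - a l2)))).
Proof.
set z := Csum _.
have -> : Csum (fun l1 => Csum (fun l2 => Cexpi (a l1 - a l2))) = Cmul z (Cconj z).
  rewrite Csum_conj Csum_mulr; apply: Csum_ext => l1; rewrite Csum_mull; apply: Csum_ext => l2.
  by rewrite E_sub.
rewrite /N2 /=; ring.
Qed.

Lemma N2_sum2 (I : finType) (a : I -> R) :
  N2 (Csum (fun l => Cexpi (a l))) * N2 (Csum (fun l => Cexpi (a l))) =
  Re (Csum (fun l1 => Csum (fun l2 => Csum (fun l3 => Csum (fun l4 =>
     Cexpi (a l1 - a l2 + a l3 - a l4)))))).
Proof.
set z := Csum _.
set w := Cmul z (Cconj z).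
have hw : w = Csum (fun l1 => Csum (fun l2 => Cexpi (a l1 - a l2))).
  rewrite /w Csum_conj Csum_mulr; apply: Csum_ext => l1; rewrite Csum_mull; apply: Csum_ext => l2.
  by rewrite E_sub.
have -> : Csum (fun l1 => Csum (fun l2 => Csum (fun l3 => Csum (fun l4 =>
     Cexpi (a l1 - a l2 + a l3 - a l4))))) = Cmul w w.
  rewrite {1}hw Csum_mulr; apply: Csum_ext => l1; rewrite Csum_mulr; apply: Csum_ext => l2.
  rewrite hw Csum_mull; apply: Csum_ext => l3; rewrite Csum_mull; apply: Csum_ext => l4.
  have -> : a l1 - a l2 + a l3 - a l4 = (a l1 - a l2) + (a l3 - a l4) by ring.
  by rewrite E_add.
rewrite /w /N2 /=; ring.
Qed.

Lemma swap_in4 (I J : finType) (F : I -> J -> J -> J -> J -> Cplx) :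
  Csum (fun k => Csum (fun l1 => Csum (fun l2 => Csum (fun l3 => Csum (fun l4 => F k l1 l2 l3 l4))))) =
  Csum (fun l1 => Csum (fun l2 => Csum (fun l3 => Csum (fun l4 => Csum (fun k => F k l1 l2 l3 l4))))).
Proof.
rewrite Csum_swap; apply: Csum_ext => l1; rewrite Csum_swap; apply: Csum_ext => l2.
rewrite Csum_swap; apply: Csum_ext => l3; rewrite Csum_swap; apply: Csum_ext => l4.
by [].
Qed.

Lemma sum2_factor (I : finType) (P Q : I -> Cplx) Z :
  Csum (fun k => Csum (fun k' => Cmul (Cmul (P k') (Q k)) Z)) = Cmul (Cmul (Csum P) (Csum Q)) Z.
Proof.
have -> : Cmul (Csum P) (Csum Q) = Csum (fun k => Csum (fun k' => Cmul (P k') (Q k))).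
  rewrite CmulC Csum_mulr; apply: Csum_ext => k; rewrite Csum_mull; apply: Csum_ext => k'.
  exact: CmulC.
by rewrite Csum_mulr; apply: Csum_ext => k; rewrite Csum_mulr.
Qed.

Lemma ph_lin4 p (D : 'I_p -> nat) (k : Zprod D) (w1 w2 w3 w4 : 'I_p -> R) :
  ph k w1 - ph k w2 + ph k w3 - ph k w4 = ph k (fun j => w1 j - w2 j + w3 j - w4 j).
Proof.
rewrite /ph -!Rsum_sub -Rsum_add -Rsum_sub; apply: Rsum_ext => j.
have hD : INR (D j) <> 0 \/ INR (D j) = 0 by lra.
case: hD => h; [field; exact: h | rewrite h /Rdiv Rinv_0; ring].
Qed.

Lemma ph_opp p (D : 'I_p -> nat) (k : Zprod D) (w : 'I_p -> R) :
  - ph k w = ph k (fun j => - w j).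
Proof. by rewrite /ph Rsum_opp; apply: Rsum_ext => j; rewrite /Rdiv; ring. Qed.

Lemma ph_sub p (D : 'I_p -> nat) (k : Zprod D) (w1 w2 : 'I_p -> R) :
  ph k w1 - ph k w2 = ph k (fun j => w1 j - w2 j).
Proof. by rewrite /ph -Rsum_sub; apply: Rsum_ext => j; rewrite /Rdiv; ring. Qed.

Lemma ph0 p (D : 'I_p -> nat) (k : Zprod D) : ph k (fun _ => 0) = 0.
Proof. rewrite /ph -[RHS](Rmult_0_l (Rsum (fun _ : 'I_p => 1))) Rsum_mull; apply: Rsum_ext => j; rewrite /Rdiv; ring. Qed.

Lemma mod_divZ (D a b : nat) : (0 < D)%nat ->
  (a %% D = b %% D)%nat <-> (Z.divide (Z.of_nat D) (Z.of_nat a - Z.of_nat b))%Z.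
Proof.
move=> hD.
have Za : Z.of_nat a = (Z.of_nat (a %/ D) * Z.of_nat D + Z.of_nat (a %% D))%Z.
  by rewrite {1}(divn_eq a D) -plusE -multE Nat2Z.inj_add Nat2Z.inj_mul.
have Zb : Z.of_nat b = (Z.of_nat (b %/ D) * Z.of_nat D + Z.of_nat (b %% D))%Z.
  by rewrite {1}(divn_eq b D) -plusE -multE Nat2Z.inj_add Nat2Z.inj_mul.
have /ltP ha := ltn_pmod a hD; have /ltP hb := ltn_pmod b hD.
rewrite Za Zb.
move: (a %/ D)%nat (b %/ D)%nat (a %% D)%nat (b %% D)%nat ha hb => qa qb ra' rb' ha hb.
split.
  by move=> ->; exists (Z.of_nat qa - Z.of_nat qb)%Z; ring.
case=> t ht.
have ht' : (Z.of_nat ra' - Z.of_nat rb' = (t - Z.of_nat qa + Z.of_nat qb) * Z.of_nat D)%Z by lia.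
have : (t - Z.of_nat qa + Z.of_nat qb = 0)%Z by nia.
move=> h0; rewrite h0 in ht'; apply: Nat2Z.inj; lia.
Qed.

Local Open Scope R_scope.

Definition Csum4 (I : finType) (F : I -> I -> I -> I -> Cplx) :=
  Csum (fun l1 => Csum (fun l2 => Csum (fun l3 => Csum (fun l4 => F l1 l2 l3 l4)))).
Definition Rsum4 (I : finType) (F : I -> I -> I -> I -> R) :=
  Rsum (fun l1 => Rsum (fun l2 => Rsum (fun l3 => Rsum (fun l4 => F l1 l2 l3 l4)))).

Lemma RR2 (I J : finType) (c : R) (W : I -> J -> Cplx) :
  Rsum (fun k => Rsum (fun k' => c * Re (W k k'))) = c * Re (Csum (fun k => Csum (fun k' => W k k'))).
Proof.
rewrite Csum_Re Rsum_mull; apply: Rsum_ext => k; by rewrite Csum_Re Rsum_mull.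
Qed.

Lemma Re4 (I : finType) (F : I -> I -> I -> I -> Cplx) :
  Re (Csum4 F) = Rsum4 (fun l1 l2 l3 l4 => Re (F l1 l2 l3 l4)).
Proof.
rewrite /Csum4 /Rsum4 Csum_Re; apply: Rsum_ext => l1; rewrite Csum_Re; apply: Rsum_ext => l2.
rewrite Csum_Re; apply: Rsum_ext => l3; by rewrite Csum_Re.
Qed.

Lemma mull4 (I : finType) c (F : I -> I -> I -> I -> R) :
  c * Rsum4 F = Rsum4 (fun l1 l2 l3 l4 => c * F l1 l2 l3 l4).
Proof.
rewrite /Rsum4 Rsum_mull; apply: Rsum_ext => l1; rewrite Rsum_mull; apply: Rsum_ext => l2.
rewrite Rsum_mull; apply: Rsum_ext => l3; by rewrite Rsum_mull.
Qed.

Lemma Csum4_ext (I : finType) (F F' : I -> I -> I -> I -> Cplx) :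
  (forall l1 l2 l3 l4, F l1 l2 l3 l4 = F' l1 l2 l3 l4) -> Csum4 F = Csum4 F'.
Proof.
move=> h; rewrite /Csum4; apply: Csum_ext => l1; apply: Csum_ext => l2; apply: Csum_ext => l3.
by apply: Csum_ext => l4.
Qed.

Lemma Rsum4_ext (I : finType) (F F' : I -> I -> I -> I -> R) :
  (forall l1 l2 l3 l4, F l1 l2 l3 l4 = F' l1 l2 l3 l4) -> Rsum4 F = Rsum4 F'.
Proof.
move=> h; rewrite /Rsum4; apply: Rsum_ext => l1; apply: Rsum_ext => l2; apply: Rsum_ext => l3.
by apply: Rsum_ext => l4.
Qed.

Lemma swap2_in4 (I J : finType) (F : I -> I -> J -> J -> J -> J -> Cplx) :
  Csum (fun k => Csum (fun k' => Csum4 (F k k'))) =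
  Csum4 (fun l1 l2 l3 l4 => Csum (fun k => Csum (fun k' => F k k' l1 l2 l3 l4))).
Proof.
rewrite /Csum4.
rewrite (Csum_ext (fun k => swap_in4 (fun k' l1 l2 l3 l4 => F k k' l1 l2 l3 l4))).
by rewrite swap_in4.
Qed.

Section Main.
Variables (m m' : nat) (d : 'I_m -> nat) (d' : 'I_m' -> nat) (n : nat)
  (Hd : forall j, (0 < d j)%nat) (Hd' : forall j, (0 < d' j)%nat)
  (HnG : #|Zprod d| = n) (HnN : #|Zprod d'| = n) (f : Zprod d -> 'I_m' -> R).

Local Notation G := (Zprod d).
Local Notation NN := (Zprod d').

Lemma n_pos : 0 < INR n.
Proof.
rewrite -HnG; apply: lt_0_INR; apply/ltP; apply/card_gt0P.
by exists (finfun (fun j => Ordinal (Hd j))).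
Qed.

Definition Iv (r r' : NN) (k k' : G) := col_inner (Mr n f r) (Mr n f r') k k'.
Definition al (r r' : NN) (k k' : G) (l : G) : R :=
  ph k' (fun j => INR (l j)) - ph k (fun j => INR (l j)) + (ph r' (f l) - ph r (f l)).

Lemma I_eq r r' k k' : Iv r r' k k' = Cscale (/ INR n) (Csum (fun l => Cexpi (al r r' k k' l))).
Proof.
rewrite /Iv /col_inner Csum_scale; apply: Csum_ext => l.
have np := n_pos.
have hc : (1 / sqrt (INR n)) * (1 / sqrt (INR n)) = / INR n.
  have hs := sqrt_sqrt (INR n) (Rlt_le _ _ np).
  have hs0 : sqrt (INR n) <> 0 by have := sqrt_lt_R0 _ np; lra.
  rewrite -{3}hs; field; exact: hs0.
rewrite /Mr /al.
change (chiG k l) with (Cexpi (ph k (fun j => INR (l j)))).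
change (chiG k' l) with (Cexpi (ph k' (fun j => INR (l j)))).
change (chiN r (f l)) with (Cexpi (ph r (f l))).
change (chiN r' (f l)) with (Cexpi (ph r' (f l))).
rewrite E_add !E_sub -hc.
apply: Cext => /=; ring.
Qed.

Definition zsb (l1 l2 l3 l4 : G) : bool :=
  [forall j, (l1 j + l3 j) %% d j == (l2 j + l4 j) %% d j].
Definition Yq (l1 l2 l3 l4 : G) : 'I_m -> R :=
  fun j => INR (l1 j) - INR (l2 j) + INR (l3 j) - INR (l4 j).
Definition Xq (l1 l2 l3 l4 : G) : 'I_m' -> R :=
  fun j => f l1 j + f l3 j - f l2 j - f l4 j.
Definition Aq (x : 'I_m' -> R) : Cplx := Csum (fun r : NN => chiN r x).

Lemma ph_ext p (D : 'I_p -> nat) (k : Zprod D) (w w' : 'I_p -> R) :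
  (forall j, w j = w' j) -> ph k w = ph k w'.
Proof. by move=> h; rewrite /ph; apply: Rsum_ext => j; rewrite h. Qed.

Lemma orthY l1 l2 l3 l4 (w : 'I_m -> R) :
  (forall j, w j = Yq l1 l2 l3 l4 j) \/ (forall j, w j = - Yq l1 l2 l3 l4 j) ->
  Csum (fun k : G => Cexpi (ph k w)) = if zsb l1 l2 l3 l4 then mkC (INR n) 0 else C0.
Proof.
move=> hw.
pose y j := (Z.of_nat (l1 j + l3 j) - Z.of_nat (l2 j + l4 j))%Z.
have yZ : forall j, Yq l1 l2 l3 l4 j = IZR (y j).
  move=> j; rewrite /y /Yq minus_IZR -!INR_IZR_INZ -!plusE !plus_INR; ring.
have [s [s1 ws]] : exists s : Z, (s = 1 \/ s = -1)%Z /\ forall j, w j = IZR (s * y j).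
  case: hw => h; [exists 1%Z | exists (-1)%Z]; (split; [by [left|right] | move=> j]);
    rewrite h yZ mult_IZR /=; ring.
case: (boolP (zsb l1 l2 l3 l4)) => h.
  rewrite sum_ph_all ?HnG // => j.
  move/forallP: h => /(_ j) /eqP /(mod_divZ _ _ (Hd j)) [t ht].
  exists (s * t)%Z; rewrite ws /y ht mult_IZR mult_IZR mult_IZR -INR_IZR_INZ; ring.
move/forallPn: h => [j hj].
apply: (sum_ph_zero Hd (j0 := j) (z := (s * y j)%Z)); first exact: ws.
move=> hdiv; move/negP: hj; apply; apply/eqP; apply/(mod_divZ _ _ (Hd j)).
case: s1 => e; rewrite e in hdiv.
  by rewrite Z.mul_1_l in hdiv.
have e' : (-1 * y j = - y j)%Z by ring.
by move: hdiv; rewrite e' => /Z.divide_opp_r.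
Qed.

Lemma kk_sum r r' l1 l2 l3 l4 :
  Csum (fun k => Csum (fun k' => Cexpi (al r r' k k' l1 - al r r' k k' l2 + al r r' k k' l3 - al r r' k k' l4))) =
  Cscale (if zsb l1 l2 l3 l4 then INR n * INR n else 0)
    (Cexpi (ph r' (Xq l1 l2 l3 l4) - ph r (Xq l1 l2 l3 l4))).
Proof.
set Y := Yq l1 l2 l3 l4; set X := Xq l1 l2 l3 l4.
have e : forall k k', al r r' k k' l1 - al r r' k k' l2 + al r r' k k' l3 - al r r' k k' l4 =
    (ph k' Y + ph k (fun j => - Y j)) + (ph r' X - ph r X).
  move=> k k'; rewrite /al.
  have h1 := ph_lin4 k' (fun j => INR (l1 j)) (fun j => INR (l2 j)) (fun j => INR (l3 j)) (fun j => INR (l4 j)).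
  have h2 := ph_lin4 k (fun j => INR (l1 j)) (fun j => INR (l2 j)) (fun j => INR (l3 j)) (fun j => INR (l4 j)).
  have h3 := ph_opp k Y.
  have h4 := ph_lin4 r' (f l1) (f l2) (f l3) (f l4).
  have h5 := ph_lin4 r (f l1) (f l2) (f l3) (f l4).
  have h6 : ph r' (fun j => f l1 j - f l2 j + f l3 j - f l4 j) = ph r' X.
    by apply: ph_ext => j; rewrite /X /Xq; ring.
  have h7 : ph r (fun j => f l1 j - f l2 j + f l3 j - f l4 j) = ph r X.
    by apply: ph_ext => j; rewrite /X /Xq; ring.
  rewrite -h3; rewrite /Y /Yq -h1 -h2 in h3 *; lra.
rewrite (Csum_ext (fun k => Csum_ext (fun k' => congr1 Cexpi (e k k')))).
rewrite (Csum_ext (fun k => Csum_ext (fun k' => E_add _ _))).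
rewrite (Csum_ext (fun k => Csum_ext (fun k' => congr1 (fun z => Cmul z _) (E_add _ _)))).
rewrite (sum2_factor (fun k' => Cexpi (ph k' Y)) (fun k => Cexpi (ph k (fun j => - Y j)))).
rewrite (orthY (l1:=l1) (l2:=l2) (l3:=l3) (l4:=l4) (w := Y)); last by left.
rewrite (orthY (l1:=l1) (l2:=l2) (l3:=l3) (l4:=l4) (w := fun j => - Y j)); last by right.
case: (zsb l1 l2 l3 l4); apply: Cext => /=; ring.
Qed.

Lemma rr_sum (x : 'I_m' -> R) (c : R) :
  Csum (fun r : NN => Csum (fun r' : NN => Cscale c (Cexpi (ph r' x - ph r x)))) =
  Cscale c (Cmul (Aq x) (Cconj (Aq x))).
Proof.
have e : forall r r' : NN, Cscale c (Cexpi (ph r' x - ph r x)) =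
   Cmul (Cmul (Cexpi (ph r' x)) (Cconj (Cexpi (ph r x)))) (mkC c 0).
  by move=> r r'; rewrite E_sub; apply: Cext => /=; ring.
rewrite (Csum_ext (fun r => Csum_ext (fun r' => e r r'))).
rewrite (sum2_factor (fun r' : NN => Cexpi (ph r' x)) (fun r : NN => Cconj (Cexpi (ph r x)))).
rewrite -Csum_conj /Aq.
change (Csum (fun r : NN => chiN r x)) with (Csum (fun r : NN => Cexpi (ph r x))).
apply: Cext => /=; ring.
Qed.

Definition c4 := / INR n * / INR n * (/ INR n * / INR n).

Lemma T4_eq :
  Rsum (fun r => Rsum (fun r' => Rsum (fun k => Rsum (fun k' => N2 (Iv r r' k k') * N2 (Iv r r' k k'))))) =
  Rsum4 (fun l1 l2 l3 l4 => c4 * ((if zsb l1 l2 l3 l4 then INR n * INR n else 0) * N2 (Aq (Xq l1 l2 l3 l4)))).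
Proof.
have s1 : forall r r' k k', N2 (Iv r r' k k') * N2 (Iv r r' k k') =
   c4 * Re (Csum4 (fun l1 l2 l3 l4 => Cexpi (al r r' k k' l1 - al r r' k k' l2 + al r r' k k' l3 - al r r' k k' l4))).
  move=> r r' k k'; rewrite I_eq N2_scale.
  have := N2_sum2 (al r r' k k'); rewrite /Csum4 => <-; rewrite /c4; ring.
have s2 : forall r r', Rsum (fun k => Rsum (fun k' => N2 (Iv r r' k k') * N2 (Iv r r' k k'))) =
   c4 * Re (Csum4 (fun l1 l2 l3 l4 => Cscale (if zsb l1 l2 l3 l4 then INR n * INR n else 0)
    (Cexpi (ph r' (Xq l1 l2 l3 l4) - ph r (Xq l1 l2 l3 l4))))).
  move=> r r'.
  rewrite (Rsum_ext (fun k => Rsum_ext (fun k' => s1 r r' k k'))) RR2 swap2_in4.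
  congr (_ * Re _); apply: Csum4_ext => l1 l2 l3 l4; exact: kk_sum.
rewrite (Rsum_ext (fun r => Rsum_ext (fun r' => s2 r r'))) RR2 swap2_in4.
rewrite (Csum4_ext (fun l1 l2 l3 l4 => rr_sum _ _)) Re4 mull4.
apply: Rsum4_ext => l1 l2 l3 l4; rewrite /N2 /=; ring.
Qed.

Lemma Rsum_ite_eq (I : finType) (a : I) u v :
  Rsum (fun x => if a == x then u else v) = INR #|I| * v + (u - v).
Proof.
rewrite (Rsum_ext (G := fun x => v + (if a == x then u - v else 0))); last first.
  by move=> x; case: (a == x); ring.
rewrite Rsum_add Rsum_const (Rsum_single (i0 := a)) ?eqxx //.
by move=> x hx; rewrite eq_sym (negbTE hx).
Qed.

Lemma Rsum_ite_eq' (I : finType) (a : I) u v :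
  Rsum (fun x => if x == a then u else v) = INR #|I| * v + (u - v).
Proof. by rewrite -(Rsum_ite_eq a); apply: Rsum_ext => x; rewrite eq_sym. Qed.

Lemma Rsum4_ge0 (I : finType) (F : I -> I -> I -> I -> R) :
  (forall l1 l2 l3 l4, 0 <= F l1 l2 l3 l4) -> 0 <= Rsum4 F.
Proof.
move=> h; apply: Rsum_ge0 => l1; apply: Rsum_ge0 => l2; apply: Rsum_ge0 => l3; exact: Rsum_ge0.
Qed.

Lemma Rsum4_eq0 (I : finType) (F : I -> I -> I -> I -> R) :
  (forall l1 l2 l3 l4, 0 <= F l1 l2 l3 l4) -> Rsum4 F = 0 -> forall l1 l2 l3 l4, F l1 l2 l3 l4 = 0.
Proof.
move=> h s l1 l2 l3 l4.
have g3 : forall a b c, 0 <= Rsum (fun l4 => F a b c l4) by move=> a b c; exact: Rsum_ge0.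
have g2 : forall a b, 0 <= Rsum (fun l3 => Rsum (fun l4 => F a b l3 l4)) by move=> a b; exact: Rsum_ge0.
have g1 : forall a, 0 <= Rsum (fun l2 => Rsum (fun l3 => Rsum (fun l4 => F a l2 l3 l4))) by move=> a; exact: Rsum_ge0.
have e1 := Rsum_eq0 g1 s l1.
have e2 := Rsum_eq0 (g2 l1) e1 l2.
have e3 := Rsum_eq0 (g3 l1 l2) e2 l3.
exact: Rsum_eq0 (h l1 l2 l3) e3 l4.
Qed.

Lemma Rsum4_add (I : finType) (F F' : I -> I -> I -> I -> R) :
  Rsum4 (fun l1 l2 l3 l4 => F l1 l2 l3 l4 + F' l1 l2 l3 l4) = Rsum4 F + Rsum4 F'.
Proof.
rewrite /Rsum4 -Rsum_add; apply: Rsum_ext => l1; rewrite -Rsum_add; apply: Rsum_ext => l2.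
rewrite -Rsum_add; apply: Rsum_ext => l3; by rewrite -Rsum_add.
Qed.

Definition tb (l1 l2 l3 l4 : G) : bool := ((l1 == l2) && (l3 == l4)) || ((l1 == l4) && (l3 == l2)).

Lemma count_triv : Rsum4 (fun l1 l2 l3 l4 => if tb l1 l2 l3 l4 then 1 else 0) = INR n * (2 * INR n - 1).
Proof.
have s4 : forall l1 l2 l3 : G, Rsum (fun l4 => if tb l1 l2 l3 l4 then 1 else 0) =
    if (l1 == l2) || (l3 == l2) then 1 else 0.
  move=> l1 l2 l3; rewrite /tb.
  case: (boolP (l1 == l2)) => h1; case: (boolP (l3 == l2)) => h2 /=.
  - rewrite (eqP h2) -(eqP h1) (Rsum_ext (G := fun l4 => if l1 == l4 then 1 else 0)).
      by rewrite Rsum_ite_eq; ring.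
    by move=> l4; case: (l1 == l4).
  - rewrite (Rsum_ext (G := fun l4 => if l3 == l4 then 1 else 0)) ?Rsum_ite_eq; first ring.
    by move=> l4; rewrite andbF orbF.
  - rewrite (Rsum_ext (G := fun l4 => if l1 == l4 then 1 else 0)) ?Rsum_ite_eq; first ring.
    by move=> l4; rewrite andbT.
  - rewrite (Rsum_ext (G := fun _ => 0)) ?Rsum_const; first ring.
    by move=> l4; rewrite andbF.
have s3 : forall l1 l2 : G, Rsum (fun l3 => Rsum (fun l4 => if tb l1 l2 l3 l4 then 1 else 0)) =
    if l2 == l1 then INR n else 1.
  move=> l1 l2; rewrite (Rsum_ext (fun l3 => s4 l1 l2 l3)).
  case: (eqVneq l1 l2) => [_|hne] /=.
    by rewrite Rsum_const HnG; ring.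
  by rewrite Rsum_ite_eq' HnG; ring.
rewrite /Rsum4 (Rsum_ext (fun l1 => Rsum_ext (fun l2 => s3 l1 l2))).
rewrite (Rsum_ext (G := fun _ => 2 * INR n - 1)).
  by rewrite Rsum_const HnG.
by move=> l1; rewrite Rsum_ite_eq' HnG; ring.
Qed.

Lemma Aq0 (x : 'I_m' -> R) : (forall j, x j = 0) -> N2 (Aq x) = INR n * INR n.
Proof.
move=> hx; rewrite /Aq.
change (Csum (fun r : NN => chiN r x)) with (Csum (fun r : NN => Cexpi (ph r x))).
rewrite sum_ph_all // ?HnN.
  by rewrite /N2 /=; ring.
by move=> j; exists 0%Z; rewrite hx; ring.
Qed.

Lemma triv_split l1 l2 l3 l4 :
  (if zsb l1 l2 l3 l4 then N2 (Aq (Xq l1 l2 l3 l4)) else 0) =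
  INR n * INR n * (if tb l1 l2 l3 l4 then 1 else 0) +
  (if zsb l1 l2 l3 l4 && ~~ tb l1 l2 l3 l4 then N2 (Aq (Xq l1 l2 l3 l4)) else 0).
Proof.
case: (boolP (tb l1 l2 l3 l4)) => ht; last by rewrite andbT; case: zsb; ring.
rewrite andbF.
have hz : zsb l1 l2 l3 l4.
  apply/forallP => j; move: ht; rewrite /tb.
  by case/orP => /andP [/eqP -> /eqP ->] //; rewrite addnC.
have hx : forall j, Xq l1 l2 l3 l4 j = 0.
  move: ht; rewrite /tb /Xq.
  by case/orP => /andP [/eqP -> /eqP ->] j; ring.
by rewrite hz Aq0 //; ring.
Qed.

Lemma zsb_diag (l1 l2 : G) : zsb l1 l2 l2 l2 = (l1 == l2).
Proof.
apply/forallP/eqP => [h|->]; last by move=> j.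
apply/ffunP => j; apply: val_inj => /=.
by move: (h j); rewrite eqn_modDr !modn_small // => /eqP.
Qed.

Lemma ex_neq (k k' : G) : k != k' -> exists j, nat_of_ord (k j) <> nat_of_ord (k' j).
Proof.
move=> hne; apply: NNPP => h; move/negP: hne; apply; apply/eqP/ffunP => j.
apply: val_inj; apply: NNPP => h'; apply: h; by exists j.
Qed.

Lemma unit_I r k k' : Iv r r k k' = if k == k' then C1 else C0.
Proof.
rewrite I_eq.
have e : forall l, al r r k k' l = ph l (fun j => INR (k' j) - INR (k j)).
  move=> l; rewrite /al.
  have -> : ph r (f l) - ph r (f l) = 0 by ring.
  rewrite Rplus_0_r /ph -Rsum_sub; apply: Rsum_ext => j; rewrite /Rdiv; ring.
rewrite (Csum_ext (fun l => congr1 Cexpi (e l))).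
have np := n_pos.
case: (eqVneq k k') => [<-|hne].
  rewrite sum_ph_all ?HnG //.
    by apply: Cext => /=; field; lra.
  by move=> j; exists 0%Z; ring.
case: (ex_neq hne) => j hj.
rewrite (sum_ph_zero Hd (j0 := j) (z := (Z.of_nat (k' j) - Z.of_nat (k j))%Z)).
- by apply: Cext => /=; ring.
- by rewrite minus_IZR -!INR_IZR_INZ.
move=> /(mod_divZ _ _ (Hd j)); rewrite !modn_small // => e'.
by apply: hj.
Qed.

Lemma N2_unit r k k' : N2 (Iv r r k k') = if k == k' then 1 else 0.
Proof. by rewrite unit_I; case: (k == k'); rewrite /N2 /=; ring. Qed.

Lemma parseval r r' k : Rsum (fun k' => N2 (Iv r r' k k')) = 1.
Proof.
have np := n_pos.
have s1 : forall k', N2 (Iv r r' k k') = / INR n * / INR n *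
   Re (Csum (fun l1 => Csum (fun l2 => Cexpi (al r r' k k' l1 - al r r' k k' l2)))).
  by move=> k'; rewrite I_eq N2_scale N2_sum1.
rewrite (Rsum_ext s1) -Rsum_mull -Csum_Re Csum_swap.
rewrite (Csum_ext (fun l1 => Csum_swap (fun k' l2 => Cexpi (al r r' k k' l1 - al r r' k k' l2)))).
have s2 : forall l1 l2 : G, Csum (fun k' => Cexpi (al r r' k k' l1 - al r r' k k' l2)) =
    if l1 == l2 then mkC (INR n) 0 else C0.
  move=> l1 l2; case: (eqVneq l1 l2) => [<-|hne].
    rewrite -HnG -Csum_C1; apply: Csum_ext => k'; rewrite Rminus_diag; exact: E_0.
  have e : forall k', al r r' k k' l1 - al r r' k k' l2 =
      ph k' (fun j => INR (l1 j) - INR (l2 j)) +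
      (- ph k (fun j => INR (l1 j) - INR (l2 j)) + (ph r' (f l1) - ph r (f l1) - (ph r' (f l2) - ph r (f l2)))).
    move=> k'; rewrite /al -!ph_sub; ring.
  rewrite (Csum_ext (fun k' => congr1 Cexpi (e k'))).
  rewrite (Csum_ext (fun k' => E_add _ _)) -Csum_mulr.
  rewrite (orthY (l1 := l1) (l2 := l2) (l3 := l2) (l4 := l2)); last by left => j; rewrite /Yq; ring.
  by rewrite zsb_diag (negbTE hne) Cmul0l.
rewrite (Csum_ext (fun l1 => Csum_ext (fun l2 => s2 l1 l2))).
rewrite Csum_Re (Rsum_ext (G := fun _ => INR n)).
  rewrite Rsum_const HnG; field; lra.
move=> l1; rewrite Csum_Re (Rsum_ext (G := fun l2 => if l1 == l2 then INR n else 0)).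
  rewrite Rsum_ite_eq HnG; ring.
by move=> l2; case: (l1 == l2).
Qed.

Definition T4L := Rsum (fun r => Rsum (fun r' => Rsum (fun k => Rsum (fun k' => N2 (Iv r r' k k') * N2 (Iv r r' k k'))))).
Definition NT (l1 l2 l3 l4 : G) : R :=
  if zsb l1 l2 l3 l4 && ~~ tb l1 l2 l3 l4 then N2 (Aq (Xq l1 l2 l3 l4)) else 0.

Lemma T4_NT : T4L = / INR n * / INR n * (INR n * INR n * (INR n * (2 * INR n - 1)) + Rsum4 NT).
Proof.
have np := n_pos.
rewrite /T4L T4_eq.
rewrite (Rsum4_ext (F' := fun l1 l2 l3 l4 => / INR n * / INR n *
    (INR n * INR n * (if tb l1 l2 l3 l4 then 1 else 0) + NT l1 l2 l3 l4))).
  by rewrite -mull4 Rsum4_add -mull4 count_triv.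
move=> l1 l2 l3 l4; rewrite /NT -triv_split /c4.
case: (zsb l1 l2 l3 l4); field; lra.
Qed.

Lemma Qdiag r : Rsum (fun k => Rsum (fun k' => N2 (Iv r r k k') * N2 (Iv r r k k'))) = INR n.
Proof.
rewrite (Rsum_ext (G := fun k => 1)); first by rewrite Rsum_const HnG; ring.
move=> k; rewrite (Rsum_ext (G := fun k' => if k == k' then 1 else 0)).
  rewrite Rsum_ite_eq; ring.
by move=> k'; rewrite N2_unit; case: (k == k'); ring.
Qed.

Lemma nec_main (hmub : forall r r', r <> r' -> forall k k', N2 (Iv r r' k k') = / INR n) :
  forall l1 l2 l3 l4, zsb l1 l2 l3 l4 -> ~~ tb l1 l2 l3 l4 -> in_Nstar d' (Xq l1 l2 l3 l4).
Proof.
have np := n_pos.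
have hr : forall r r', Rsum (fun k => Rsum (fun k' => N2 (Iv r r' k k') * N2 (Iv r r' k k'))) =
    if r == r' then INR n else 1.
  move=> r r'; case: (eqVneq r r') => [<-|hne]; first exact: Qdiag.
  have hne' : r <> r' by apply/eqP.
  rewrite (Rsum_ext (G := fun k : Zprod d => Rsum (fun k' : Zprod d => / INR n * / INR n))).
    rewrite Rsum_const Rsum_const HnG; field; lra.
  by move=> k; apply: Rsum_ext => k'; rewrite hmub.
have T : T4L = INR n * (2 * INR n - 1).
  rewrite /T4L (Rsum_ext (fun r => Rsum_ext (fun r' => hr r r'))).
  rewrite (Rsum_ext (G := fun _ => 2 * INR n - 1)); first by rewrite Rsum_const HnN.
  by move=> r; rewrite Rsum_ite_eq HnN; ring.
rewrite T4_NT in T.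
have S0 : Rsum4 NT = 0.
  have e : Rsum4 NT = INR n * INR n * (/ INR n * / INR n * (INR n * INR n * (INR n * (2 * INR n - 1)) + Rsum4 NT))
     - INR n * INR n * (INR n * (2 * INR n - 1)) by field; lra.
  by rewrite e T; ring.
have ge : forall l1 l2 l3 l4, 0 <= NT l1 l2 l3 l4.
  by move=> l1 l2 l3 l4; rewrite /NT; case: (_ && _); [exact: N2_ge0 | exact: Rle_refl].
move=> l1 l2 l3 l4 hz ht.
have := Rsum4_eq0 ge S0 l1 l2 l3 l4; rewrite /NT hz ht /= => /N2_eq0 hA.
exact: (A_zero_Nstar Hd' hA).
Qed.

Lemma suf_main (hyp : forall l1 l2 l3 l4, zsb l1 l2 l3 l4 -> ~~ tb l1 l2 l3 l4 -> in_Nstar d' (Xq l1 l2 l3 l4)) :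
  forall r r', r <> r' -> forall k k', N2 (Iv r r' k k') = / INR n.
Proof.
have np := n_pos.
have S0 : Rsum4 NT = 0.
  rewrite (Rsum4_ext (F' := fun _ _ _ _ => 0 * 0)); first by rewrite -mull4; ring.
  move=> l1 l2 l3 l4; rewrite /NT; case: (boolP (_ && _)) => h; last by ring.
  case/andP: h => hz ht; case: (hyp _ _ _ _ hz ht) => j [z [hx hnd]].
  have hA : Aq (Xq l1 l2 l3 l4) = C0.
    rewrite /Aq.
    change (Csum (fun r : NN => chiN r (Xq l1 l2 l3 l4))) with
      (Csum (fun r : NN => Cexpi (ph r (Xq l1 l2 l3 l4)))).
    exact: (sum_ph_zero Hd' hx hnd).
  by rewrite hA /N2 /=; ring.
have T : T4L = INR n * (2 * INR n - 1) by rewrite T4_NT S0; field; lra.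
set Q := fun r r' => Rsum (fun k => Rsum (fun k' => N2 (Iv r r' k k') * N2 (Iv r r' k k'))).
set Dt := fun r r' : NN => if r == r' then 0 else
   Rsum (fun k => Rsum (fun k' => (N2 (Iv r r' k k') - / INR n) * (N2 (Iv r r' k k') - / INR n))).
have hD : forall r r', Dt r r' = Q r r' - (if r == r' then INR n else 1).
  move=> r r'; rewrite /Dt /Q; case: (eqVneq r r') => [<-|hne]; first by rewrite Qdiag; ring.
  rewrite (Rsum_ext (G := fun k => Rsum (fun k' => N2 (Iv r r' k k') * N2 (Iv r r' k k'))
      + (-2 / INR n) * Rsum (fun k' => N2 (Iv r r' k k')) + INR n * (/ INR n * / INR n))).
    have P1 : Rsum (fun k => Rsum (fun k' => N2 (Iv r r' k k'))) = INR n.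
      by rewrite (Rsum_ext (fun k => parseval r r' k)) Rsum_const HnG; ring.
    rewrite !Rsum_add -Rsum_mull Rsum_const P1 HnG; field; lra.
  move=> k.
  have hc : INR n * (/ INR n * / INR n) = Rsum (fun _ : Zprod d => / INR n * / INR n) by rewrite Rsum_const HnG.
  rewrite hc Rsum_mull -!Rsum_add; apply: Rsum_ext => i; rewrite /Rminus /Rdiv; ring.
have Dsum : Rsum (fun r => Rsum (fun r' => Dt r r')) = 0.
  rewrite (Rsum_ext (fun r => Rsum_ext (fun r' => hD r r'))).
  rewrite (Rsum_ext (G := fun r => Rsum (fun r' => Q r r') - (2 * INR n - 1))).
    rewrite Rsum_sub Rsum_const HnN.
    have : Rsum (fun r => Rsum (fun r' => Q r r')) = T4L by [].
    by move=> ->; rewrite T; ring.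
  move=> r; rewrite Rsum_sub Rsum_ite_eq HnN.
  have -> : Rsum (fun r' => Q r r') = Rsum (Q r) by []. ring.
have geD : forall r r', 0 <= Dt r r'.
  move=> r r'; rewrite /Dt; case: (r == r'); first exact: Rle_refl.
  apply: Rsum_ge0 => k; apply: Rsum_ge0 => k'; exact: Rle_0_sqr.
have geD1 : forall r, 0 <= Rsum (fun r' => Dt r r') by move=> r; exact: Rsum_ge0.
move=> r r' hne k k'.
have e1 := Rsum_eq0 geD1 Dsum r.
have e2 := Rsum_eq0 (geD r) e1 r'.
move: e2; rewrite /Dt; move/eqP: hne => /negbTE ->.
have g1 : forall k, 0 <= Rsum (fun k' => (N2 (Iv r r' k k') - / INR n) * (N2 (Iv r r' k k') - / INR n)).
  by move=> k0; apply: Rsum_ge0 => k1; exact: Rle_0_sqr.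
move=> e2; have e3 := Rsum_eq0 g1 e2 k.
have e4 := Rsum_eq0 (fun k1 => Rle_0_sqr _) e3 k'.
have := Rsqr_0_uniq _ e4; lra.
Qed.
End Main.

Close Scope R_scope.

Theorem theorem11 (m m' : nat) (d : 'I_m -> nat) (d' : 'I_m' -> nat) (n : nat)
  (Hd : forall j, (0 < d j)%nat) (Hd' : forall j, (0 < d' j)%nat)
  (HnG : (\prod_(j < m) d j)%nat = n) (HnN : (\prod_(j < m') d' j)%nat = n)
  (f : Zprod d -> ('I_m' -> R)) :
  complete_MUH (@Mr m m' d d' n f) <->
  (forall g1 g2 g3 g4 : Zprod d,
     Zsum_eq g1 g2 g3 g4 ->
     ~ ((g1 = g3 /\ g2 = g4) \/ (g1 = g4 /\ g2 = g3)) ->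
     in_Nstar d' (fun j => (f g1 j + f g2 j - f g3 j - f g4 j)%R)).
Proof.
have HG : #|Zprod d| = n by rewrite card_Zprod.
have HN : #|Zprod d'| = n by rewrite card_Zprod.
have np : (0 < INR n)%R by exact: (n_pos Hd HG).
have sq : forall x : R, (0 <= x)%R -> sqrt x = (1 / sqrt (INR n))%R -> x = (/ INR n)%R.
  move=> x hx e; have := sqrt_sqrt x hx; rewrite e => <-.
  have hs := sqrt_sqrt (INR n) (Rlt_le _ _ np).
  have hs0 : sqrt (INR n) <> 0%R by have := sqrt_lt_R0 _ np; lra.
  rewrite -{3}hs; field; exact: hs0.
have sqi : sqrt (/ INR n) = (1 / sqrt (INR n))%R by rewrite sqrt_inv; lra.
split.
- case=> hcard [hinj [hhad hmub]] g1 g2 g3 g4 hz hnt.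
  have hmub' : forall r r' : Zprod d', r <> r' -> forall k k' : Zprod d, N2 (Iv n f r r' k k') = (/ INR n)%R.
    move=> r r' hne k k'; apply: sq; first exact: N2_ge0.
    by have := hmub r r' hne k k'; rewrite HG.
  apply: (nec_main Hd Hd' HG HN hmub' (l1 := g1) (l2 := g3) (l3 := g2) (l4 := g4)).
    by apply/forallP => j; apply/eqP; exact: hz.
  by apply/negP; case/orP => /andP [/eqP e1 /eqP e2]; apply: hnt; [left|right].
- move=> hyp.
  have hyp' : forall l1 l2 l3 l4 : Zprod d, zsb l1 l2 l3 l4 -> ~~ tb l1 l2 l3 l4 -> in_Nstar d' (Xq f l1 l2 l3 l4).
    move=> l1 l2 l3 l4 hz ht; apply: (hyp l1 l3 l2 l4).
      by move=> j; move/forallP: hz => /(_ j) /eqP.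
    case=> [[e1 e2]|[e1 e2]]; move/negP: ht; apply; rewrite /tb.
      by rewrite e1 e2 !eqxx.
    by rewrite e1 e2 !eqxx orbT.
  have hN2 := suf_main Hd Hd' HG HN hyp'.
  have k0 : Zprod d by exact: (finfun (fun j => Ordinal (Hd j))).
  split; first by rewrite HG HN.
  split.
    move=> r r' heq; apply: NNPP => hne.
    have e := hN2 r r' hne k0 k0.
    have e' : Iv n f r r' k0 k0 = Iv n f r r k0 k0.
      rewrite /Iv /col_inner; apply: Csum_ext => l; by rewrite -heq.
    rewrite e' (unit_I Hd HG) eqxx /N2 /= in e.
    have n1 : n = 1%nat.
      apply: INR_eq; rewrite /=; have := Rinv_inv (INR n); rewrite -e; lra.
    apply: hne; move: (fintype_le1P (T := Zprod d')).
    by rewrite HN n1 => /(_ isT r) ->.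
  split.
    move=> r; split.
      move=> k k'; exact: (unit_I Hd HG).
    move=> i j; rewrite HG Cmod_N2 -sqi; congr sqrt.
    rewrite /Mr N2_scale N2_mul !N2_E.
    have hs := sqrt_sqrt (INR n) (Rlt_le _ _ np).
    have hs0 : sqrt (INR n) <> 0%R by have := sqrt_lt_R0 _ np; lra.
    rewrite -{3}hs; field; exact: hs0.
  move=> r r' hne k k'; rewrite HG Cmod_N2.
  have := hN2 r r' hne k k'; rewrite /Iv => ->; exact: sqi.
Qed.
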